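(* Let $G$ be a tree with vertex set $V$. Then \[R(G)\geq 1+\sum_{v\in V}\left(\sqrt{d_v}-1\right),\] with equality if $G$ is a star.
   Context: $d_v$ is the degree of vertex $v$; the Randi\'c index is $R(G)=\sum_{uv\in E(G)}\frac{1}{\sqrt{d_ud_v}}$ (equal to $0$ for a single vertex). A star is a tree with one vertex adjacent to all others. *)

(* Defs.v *)
From HB Require Import structures.
From mathcomp Require Import all_boot all_order all_algebra.
Set Implicit Arguments. Unset Strict Implicit. Unset Printing Implicit Defensive.
Import Order.TTheory GRing.Theory Num.Theory.

Definition simple_graph (T : finType) (e : rel T) : Prop :=
  symmetric e /\ irreflexive e.

Definition deg (T : finType) (e : rel T) (v : T) : nat := #|[set w | e v w]|.

Definition edges (T : finType) (e : rel T) : {set {set T}} :=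
  [set [set x; y] | x in T, y in T & e x y].

Definition gconnected (T : finType) (e : rel T) : Prop :=
  forall x y : T, connect e x y.

(* no cycle: no closed walk x, p_1, ..., p_k, x with k >= 2 distinct vertices
   (i.e. a cycle of length >= 3) *)
Definition acyclic (T : finType) (e : rel T) : Prop :=
  forall (x : T) (p : seq T),
    path e x p -> uniq (x :: p) -> 2 <= size p -> ~~ e (last x p) x.

Definition is_tree (T : finType) (e : rel T) : Prop :=
  [/\ simple_graph e, 0 < #|T|, gconnected e & acyclic e].

Definition is_star (T : finType) (e : rel T) : Prop :=
  is_tree e /\ exists c : T, forall v : T, v != c -> e c v.

Local Open Scope ring_scope.

Definition randic (R : rcfType) (T : finType) (e : rel T) : R :=
  \sum_(E in edges e) 1 / Num.sqrt ((\prod_(v in E) deg e v)%N)%:R.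

(* Main.v *)
Require Import Defs.
From HB Require Import structures.
From mathcomp Require Import all_boot all_order all_algebra.
From mathcomp Require Import zify ring lra.
Import Order.TTheory GRing.Theory Num.Theory.

Section Comb.
Variables (T : finType) (e : rel T).
Hypotheses (esym : symmetric e) (eirr : irreflexive e) (eac : acyclic e).

Lemma in_edges E : reflect (exists a b, e a b /\ E = [set a; b]) (E \in edges e).
Proof.
apply: (iffP idP).
  by move/imset2P=> [a b _]; rewrite inE => eab ->; exists a, b.
move=> [a [b [eab ->]]]; apply/imset2P; apply: (Imset2spec (x1:=a) (x2:=b)) => //.
by rewrite inE.
Qed.

Lemma leaf_aux (S : {set T}) N (hN : forall s : seq T, uniq s -> size s <= N) k :
  forall x p, N - size p <= k -> path e x p ->
  uniq (x :: p) -> all (mem S) (x :: p) ->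
  exists2 y, y \in S & #|[set w in S | e y w]| <= 1.
Proof.
elim: k => [|k IH] x p hk hp hu hS.
  have := hN _ hu; rewrite /= => ?; exfalso; lia.
case: (boolP [exists w, [&& w \in S, e x w & w \notin x :: p]]).
  move/existsP=> [w /and3P[wS exw wn]].
  have hu' : uniq (w :: x :: p) by rewrite cons_uniq wn hu.
  have hsz := hN _ hu'; apply: (IH w (x :: p)) => //.
  - rewrite /= in hsz *; lia.
  - by rewrite /= esym exw.
  - by rewrite /= wS.
rewrite negb_exists => /forallP hn.
have xS : x \in S by move: hS => /= /andP[].
exists x => //.
case: p hp hu hS hk {hn} (hn) => [|h q] hp hu hS hk hn.
  rewrite (_ : [set w in S | e x w] = set0) ?cards0 //.
  apply/setP => w; rewrite !inE; apply/negP => /andP[wS exw].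
  move: (hn w); rewrite wS exw /= inE negbK => /eqP wx.
  by move: exw; rewrite wx eirr.
apply: leq_trans (subset_leq_card (_ : _ \subset [set h])) _; last by rewrite cards1.
apply/subsetP => w; rewrite !inE => /andP[wS exw].
move: (hn w); rewrite wS exw /= negbK in_cons => /orP[/eqP wx|].
  by move: exw; rewrite wx eirr.
rewrite in_cons => /orP[//|wq].
case/splitPr: wq hp hu => q1 q2 hp hu.
exfalso.
have hp' : path e x (h :: rcons q1 w).
  move: hp; rewrite /= cat_path rcons_path => /andP[-> /andP[-> /=]].
  by case/andP.
have hu' : uniq (x :: h :: rcons q1 w).
  have := hu; rewrite -[x :: h :: (q1 ++ w :: q2)]/((x :: h :: q1) ++ w :: q2).
  rewrite -[x :: h :: rcons q1 w]/(rcons (x :: h :: q1) w).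
  rewrite cat_uniq rcons_uniq => /and3P[u1 /hasPn hw _].
  by rewrite u1 andbT; apply: hw; rewrite inE eqxx.
have := eac x (h :: rcons q1 w) hp' hu'.
rewrite /= last_rcons size_rcons esym exw; by move/(_ isT).
Qed.

Lemma leaf (S : {set T}) : S != set0 ->
  exists2 y, y \in S & #|[set w in S | e y w]| <= 1.
Proof.
case/set0Pn => s sS.
apply: (@leaf_aux S #|T| _ #|T| s [::]) => //=; rewrite ?subn0 ?sS //.
by move=> t ut; rewrite -(card_uniqP ut) max_card.
Qed.

Definition ES (S : {set T}) := [set E in edges e | E \subset S].

Lemma card_ES n : forall S : {set T}, #|S| = n -> #|ES S| <= n.-1.
Proof.
elim: n => [|n IH] S hS.
  rewrite leqn0 cards_eq0; apply/eqP/setP => E; rewrite !inE.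
  apply/negP => /andP[/in_edges[a [b [_ ->]]] sub].
  have : a \in S by apply: (subsetP sub); rewrite !inE eqxx.
  by rewrite (cards0_eq hS) inE.
have : S != set0 by rewrite -card_gt0 hS.
case/leaf => y yS hN.
set N := [set w in S | e y w].
have hS' : #|S :\ y| = n by move: hS; rewrite (cardsD1 y) yS /= => -[].
have hNS : N \subset S :\ y.
  apply/subsetP => w; rewrite !inE => /andP[wS eyw]; rewrite wS andbT.
  by apply/eqP => wy; move: eyw; rewrite wy eirr.
have hNn : #|N| <= n by rewrite -hS' subset_leq_card.
have hsub : ES S \subset ES (S :\ y) :|: [set [set y; w] | w in N].
  apply/subsetP => E; rewrite !inE => /andP[hE sub].
  case/in_edges: (hE) => a [b [eab dE]].
  case: (boolP (y \in E)) => yE.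
    apply/orP; right; apply/imsetP.
    move: yE; rewrite dE !inE => /orP[/eqP ya|/eqP yb].
      exists b; last by rewrite ya.
      rewrite !inE -ya in eab *; rewrite eab andbT.
      by apply: (subsetP sub); rewrite dE !inE eqxx orbT.
    exists a; last by rewrite yb setUC.
    rewrite !inE -yb esym in eab *; rewrite eab andbT.
    by apply: (subsetP sub); rewrite dE !inE eqxx.
  apply/orP; left; rewrite hE /=.
  apply/subsetP => z zE; rewrite !inE (subsetP sub _ zE) andbT.
  by apply/eqP => zy; move: yE; rewrite -zy zE.
have := leq_card_setU (ES (S :\ y)) [set [set y; w] | w in N] => -[h1 _].
have H1 := leq_trans (subset_leq_card hsub) h1.
have H2 := leq_add (IH _ hS') (leq_imset_card (fun w => [set y; w]) N).
have hN1 : #|N| <= 1 by [].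
move: (leq_trans H1 H2) hN1 hNn; move: #|N| #|ES S| => a b; lia.
Qed.

Lemma card_edges : #|edges e| <= #|T|.-1.
Proof.
have -> : edges e = ES [set: T].
  by apply/setP => E; rewrite !inE subsetT andbT.
by apply: card_ES; rewrite cardsT.
Qed.

End Comb.

Local Open Scope ring_scope.

Section Real.
Variables (R : rcfType) (T : finType) (e : rel T).
Hypotheses (esym : symmetric e) (eirr : irreflexive e).

Definition f (v : T) : R := 1 / Num.sqrt (deg e v)%:R.

Definition term (E : {set T}) : R :=
  1 / Num.sqrt (\prod_(v in E) deg e v)%N%:R + 1 - \sum_(v in E) f v.

Lemma deg_edges v : #|[set E in edges e | v \in E]| = deg e v.
Proof.
have -> : [set E in edges e | v \in E] = [set [set v; w] | w in [set w | e v w]].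
  apply/setP => E; rewrite inE; apply/andP/imsetP.
    move=> [/in_edges [a [b [eab dE]]] vE]; move: vE; rewrite dE !inE.
    case/orP => /eqP ->.
      by exists b; rewrite ?inE.
    by exists a; [rewrite inE esym | rewrite setUC].
  move=> [w]; rewrite inE => evw ->; split; last by rewrite !inE eqxx.
  by apply/in_edges; exists v, w.
rewrite card_in_imset // => w1 w2; rewrite !inE => h1 h2 eq.
have : w1 \in [set v; w2] by rewrite -eq !inE eqxx orbT.
rewrite !inE => /orP[/eqP w1v|/eqP //].
by move: h1; rewrite w1v eirr.
Qed.

Lemma nat_div_sqrt n : (n%:R : R) * (1 / Num.sqrt n%:R) = Num.sqrt n%:R.
Proof.
case: n => [|n]; first by rewrite mul0r sqrtr0.
have hpos : 0 < Num.sqrt (n.+1%:R : R) by rewrite sqrtr_gt0 ltr0Sn.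
rewrite -{1}(sqr_sqrtr (ler0n R n.+1)) expr2.
by field; rewrite lt0r_neq0.
Qed.

Lemma sum_sqrt : \sum_v Num.sqrt (deg e v)%:R = \sum_(E in edges e) \sum_(v in E) f v.
Proof.
rewrite [RHS](eq_bigr (fun E : {set T} => \sum_(v : T) (if v \in E then f v else 0))); last first.
  by move=> E _; rewrite big_mkcond.
rewrite exchange_big /=; apply: eq_bigr => v _.
rewrite -big_mkcondr /= (eq_bigl (mem [set E in edges e | v \in E])); last first.
  by move=> E; rewrite !inE.
by rewrite sumr_const deg_edges -[in RHS]mulr_natl nat_div_sqrt.
Qed.

Lemma deg_gt0 a b : e a b -> (0 < deg e a)%N.
Proof. by move=> eab; apply/card_gt0P; exists b; rewrite inE. Qed.

Lemma term_set2 a b : e a b ->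
  term [set a; b] = 1 / (Num.sqrt (deg e a)%:R * Num.sqrt (deg e b)%:R) + 1
     - (1 / Num.sqrt (deg e a)%:R + 1 / Num.sqrt (deg e b)%:R).
Proof.
move=> eab.
have ab : a \notin [set b].
  by rewrite inE; apply/eqP => ab; move: eab; rewrite ab eirr.
by rewrite /term !big_setU1 //= !big_set1 /f natrM sqrtrM ?ler0n.
Qed.

Lemma term_ge0 a b : e a b -> 0 <= term [set a; b].
Proof.
move=> eab; rewrite term_set2 //.
have ha : 1 <= Num.sqrt (deg e a)%:R :> R.
  by rewrite -[X in X <= _]sqrtr1; apply: ler_wsqrtr; rewrite ler1n (deg_gt0 _ _ eab).
have hb : 1 <= Num.sqrt (deg e b)%:R :> R.
  have eba : e b a by rewrite esym.
  by rewrite -[X in X <= _]sqrtr1; apply: ler_wsqrtr; rewrite ler1n (deg_gt0 _ _ eba).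
move: ha hb; set s := Num.sqrt _; set t := Num.sqrt _ => ha hb.
have s0 : s != 0 by apply: lt0r_neq0; apply: lt_le_trans ha.
have t0 : t != 0 by apply: lt0r_neq0; apply: lt_le_trans hb.
have -> : 1 / (s * t) + 1 - (1 / s + 1 / t) = (s - 1) * (t - 1) / (s * t).
  by field; rewrite t0 s0.
apply: divr_ge0; apply: mulr_ge0; rewrite ?subr_ge0 //.
  by apply: le_trans ha.
by apply: le_trans hb.
Qed.

Lemma term_eq0 a b : e a b -> (deg e a = 1 \/ deg e b = 1)%N -> term [set a; b] = 0.
Proof.
move=> eab h; rewrite term_set2 //.
have hb : 1 <= Num.sqrt (deg e b)%:R :> R.
  have eba : e b a by rewrite esym.
  by rewrite -[X in X <= _]sqrtr1; apply: ler_wsqrtr; rewrite ler1n (deg_gt0 _ _ eba).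
have ha : 1 <= Num.sqrt (deg e a)%:R :> R.
  by rewrite -[X in X <= _]sqrtr1; apply: ler_wsqrtr; rewrite ler1n (deg_gt0 _ _ eab).
case: h => ->; rewrite sqrtr1.
  have t0 : Num.sqrt (deg e b)%:R != 0 :> R.
    by apply: lt0r_neq0; apply: lt_le_trans hb.
  by field.
have t0 : Num.sqrt (deg e a)%:R != 0 :> R.
  by apply: lt0r_neq0; apply: lt_le_trans ha.
by field.
Qed.

Lemma key_id : \sum_(E in edges e) term E =
  randic R e + #|edges e|%:R - \sum_v Num.sqrt (deg e v)%:R.
Proof.
rewrite sum_sqrt /term /randic !big_split /= sumrN sumr_const.
by [].
Qed.

End Real.

Theorem theorem4p1 (R : rcfType) (T : finType) (e : rel T) :
  is_tree e ->
  (1 + \sum_(v : T) (Num.sqrt (deg e v)%:R - 1) <= randic R e) /\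
  (is_star e -> randic R e = 1 + \sum_(v : T) (Num.sqrt (deg e v)%:R - 1)).
Proof.
move=> [[esym eirr] Tpos conn eac].
have hE := @card_edges T e esym eirr eac.
have Hsum : \sum_(v : T) (Num.sqrt (deg e v)%:R - 1) =
    \sum_(v : T) Num.sqrt (deg e v)%:R - #|T|%:R :> R.
  by rewrite sumrB sumr_const.
have Hid := @key_id R T e esym eirr.
have Hterm : 0 <= \sum_(E in edges e) term R T e E.
  by apply: sumr_ge0 => E /in_edges [a [b [eab ->]]]; apply: (@term_ge0 R T e esym eirr).
have Hn : (#|edges e| + 1)%:R <= #|T|%:R :> R.
  rewrite ler_nat; move: hE Tpos; move: #|edges e| #|T| => x y; lia.
split.
  rewrite Hsum; rewrite natrD in Hn; lra.
move=> [_ [c hc]].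
have edge_c : forall a b, e a b -> a = c \/ b = c.
  move=> a b eab; case: (eqVneq a c) => [->|ac]; first by left.
  case: (eqVneq b c) => [->|bc]; first by right.
  exfalso.
  have ab : a != b by apply/eqP => ab; move: eab; rewrite ab eirr.
  have p1 : path e c [:: a; b] by rewrite /= hc // eab.
  have u1 : uniq [:: c; a; b].
    by rewrite /= !inE !negb_or (eq_sym c a) ac (eq_sym c b) bc ab.
  by have := eac c [:: a; b] p1 u1 isT; rewrite /= esym hc.
have deg1 : forall v, v != c -> deg e v = 1%N.
  move=> v vc; rewrite /deg (_ : [set w | e v w] = [set c]) ?cards1 //.
  apply/setP => w; rewrite !inE; apply/idP/eqP.
    move=> evw; case: (edge_c _ _ evw) => // vc'.
    by rewrite vc' eqxx in vc.
  by move->; rewrite esym hc.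
have Hterm0 : \sum_(E in edges e) term R T e E = 0.
  apply: big1 => E /in_edges [a [b [eab ->]]]; apply: (@term_eq0 R T e esym eirr) => //.
  case: (edge_c _ _ eab) => [ac|bc].
    right; apply: deg1; apply/eqP => bc; move: eab; rewrite ac bc eirr.
    by [].
  left; apply: deg1; apply/eqP => ac; move: eab; rewrite ac bc eirr.
  by [].
have hE2 : (#|T|.-1 <= #|edges e|)%N.
  have : [set [set c; v] | v in [set: T] :\ c] \subset edges e.
    apply/subsetP => E /imsetP [v]; rewrite !inE => /andP[vc _] ->.
    by apply/in_edges; exists c, v; split => //; apply: hc.
  move/subset_leq_card; rewrite card_in_imset.
    have h := cardsD1 c [set: T]; rewrite cardsT inE in h; by rewrite h.
  move=> w1 w2; rewrite !inE => /andP[h1 _] /andP[h2 _] eq.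
  have : w1 \in [set c; w2] by rewrite -eq !inE eqxx orbT.
  by rewrite !inE (negbTE h1) => /eqP.
have Hn2 : (#|edges e| + 1)%:R = #|T|%:R :> R.
  apply/eqP; rewrite eqr_nat; apply/eqP.
  move: hE hE2 Tpos; move: #|edges e| #|T| => x y; lia.
rewrite Hsum; rewrite natrD in Hn2; lra.
Qed.
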